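(* Let $\gamma\in(0,1)$ and $c\ge 0$. Define the deterministic sequence $\bar v^0=0$ and, for $n\ge 1$, $$\hat v^n = c+\gamma \bar v^{n-1},\qquad \bar v^n=\Big(1-\tfrac1n\Big)\bar v^{n-1}+\tfrac1n \hat v^n .$$ Let $b=\frac{\gamma^2+\gamma-1}{\gamma}$. Then for all $n=1,2,\dots$, $$\bar v^n\ \le\ \frac{c}{1-\gamma}\Big[1-b\,n^{-(1-\gamma)}-\frac{1-\gamma}{\gamma}\cdot\frac1n\Big].$$
   Context: This is approximate value iteration for a single-state, single-action problem with deterministic one-period reward $c$, discount factor $\gamma$, initial approximation $0$, and stepsize $\alpha_{n-1}=1/n$. *)

(* Defs.v *)
From Stdlib Require Import Reals.
Open Scope R_scope.

Fixpoint vbar (c gamma : R) (n : nat) : R :=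
  match n with
  | O => 0
  | S m =>
      let prev := vbar c gamma m in
      let vhat := c + gamma * prev in
      (1 - 1 / INR (S m)) * prev + (1 / INR (S m)) * vhat
  end.

(* Main.v *)
Require Import Defs.
From Stdlib Require Import Reals.
From Stdlib Require Import Lra Psatz.
Open Scope R_scope.

Lemma divpos (x y:R) : 0<=x -> 0<y -> 0<=x/y.
Proof. intros; unfold Rdiv; apply Rmult_le_pos; [auto| left; apply Rinv_0_lt_compat; auto]. Qed.

Lemma step (g N s t b : R) : 0 < g -> g < 1 -> 1 <= N -> 0 < s -> s <= 1 ->
  b * g = g^2 + g - 1 ->
  (0 <= b -> 1 + (1-g)/(N+1) <= t) -> (b < 0 -> t <= 1 + (1-g)/N) ->
  b*s + (1-g)/(g*(N+1)) <= (b*s*t + (1-g)/(g*N)) * (1 - (1-g)/(N+1)).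
Proof.
  intros g0 g1 N1 s0 s1 hb hlo hup.
  assert (E : (b*s*t + (1-g)/(g*N)) * (1 - (1-g)/(N+1)) - (b*s + (1-g)/(g*(N+1)))
     = (b*s*(t*(N+g) - (N+1)) * N + (1-g)) / (N*(N+1))) by (field; lra).
  assert (0 <= (b*s*(t*(N+g) - (N+1)) * N + (1-g)) / (N*(N+1))); [|lra].
  apply divpos; [|nra].
  destruct (Rle_lt_dec 0 b) as [hb0|hb0].
  - specialize (hlo hb0).
    assert (ht : (N+1) + (1-g) <= t*(N+1)).
    { apply (Rmult_le_compat_r (N+1)) in hlo; [|lra].
      replace ((1 + (1 - g) / (N + 1)) * (N + 1)) with ((N+1)+(1-g)) in hlo by (field; lra). lra. }
    assert (hbl : b <= g) by nra.
    assert (X : t*(N+g) - (N+1) >= - (1-g)^2/(N+1)).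
    { apply Rle_ge. apply (Rmult_le_reg_r (N+1)); [lra|].
      replace (- (1 - g) ^ 2 / (N + 1) * (N + 1)) with (-(1-g)^2) by (field; lra). nra. }
    assert (Y : (1-g)^2/(N+1) * N <= 1 - g).
    { apply (Rmult_le_reg_r (N+1)); [lra|].
      replace ((1 - g) ^ 2 / (N + 1) * N * (N + 1)) with ((1-g)^2 * N) by (field; lra). assert (0 <= g*(1-g)*N) by (apply Rmult_le_pos; nra). nra. }
    assert (0 <= (1-g)^2/(N+1)) by (apply divpos; nra).
    assert (b*s <= 1) by nra.
    assert (0 <= b*s) by nra.
    remember ((1-g)^2/(N+1)) as K.
    assert (b*s*(t*(N+g) - (N+1)) >= b*s*(-K)) by nra.
    assert (b*s*K <= K) by nra.
    nra.
  - specialize (hup hb0).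
    assert (ht : t*N <= N + (1-g)).
    { apply (Rmult_le_compat_r N) in hup; [|lra].
      replace ((1 + (1 - g) / N) * N) with (N+(1-g)) in hup by (field; lra). lra. }
    assert (t*N*(N+g) <= (N+(1-g))*(N+g)) by (apply Rmult_le_compat_r; lra).
    assert (X : (t*(N+g) - (N+1))*N <= g*(1-g)) by nra.
    assert (hbb : -b*g <= 1).
    { replace (-b*g) with (-(g^2+g-1)) by (rewrite <- hb; ring). nra. }
    assert (b*s < 0) by nra.
    assert (b*s*((t*(N+g) - (N+1))*N) >= b*s*(g*(1-g))) by nra.
    assert (-b*g*s <= 1) by nra.
    nra.
Qed.

Lemma vbar_S c g n : vbar c g (S n) =
  (1 - 1 / INR (S n)) * vbar c g n + (1 / INR (S n)) * (c + g * vbar c g n).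
Proof. reflexivity. Qed.

Lemma facts (g N : R) : 0 < g -> g < 1 -> 1 <= N ->
  let s := exp (-(1-g) * ln (N+1)) in
  let t := exp ((1-g) * (ln (N+1) - ln N)) in
  0 < s /\ s <= 1 /\ exp (-(1-g) * ln N) = s * t /\
  1 + (1-g)/(N+1) <= t /\ t <= 1 + (1-g)/N.
Proof.
  intros g0 g1 N1 s t.
  assert (eN1 : exp (ln (N+1)) = N+1) by (apply exp_ln; lra).
  assert (eN : exp (ln N) = N) by (apply exp_ln; lra).
  assert (lpos : 0 <= ln (N+1)).
  { pose proof (exp_ineq1_le (- ln (N+1))) as H.
    rewrite exp_Ropp, eN1 in H.
    assert (/ (N+1) <= 1) by (apply (Rmult_le_reg_r (N+1)); [lra|]; rewrite Rinv_l; lra).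
    assert (0 < /(N+1)) by (apply Rinv_0_lt_compat; lra). lra. }
  set (L := ln (N+1) - ln N).
  assert (eL : exp L = (N+1)/N).
  { unfold L; unfold Rminus; rewrite exp_plus, exp_Ropp, eN1, eN. reflexivity. }
  assert (eLm : exp (-L) = N/(N+1)).
  { rewrite exp_Ropp, eL. field. lra. }
  split; [apply exp_pos|].
  split.
  { pose proof (exp_ineq1_le ((1-g) * ln (N+1))) as H.
    assert (E : s * exp ((1-g) * ln (N+1)) = 1).
    { unfold s; rewrite <- exp_plus. replace (-(1-g) * ln (N+1) + (1-g)*ln (N+1)) with 0 by ring.
      apply exp_0. }
    assert (0 < s) by apply exp_pos.
    assert (0 <= (1-g)*ln (N+1)) by (apply Rmult_le_pos; lra).
    nra. }
  split.
  { unfold s, t; rewrite <- exp_plus. f_equal. ring. }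
  split.
  { pose proof (exp_ineq1_le (-L)) as H. rewrite eLm in H.
    assert (HL : 1/(N+1) <= L).
    { replace (1/(N+1)) with (1 - N/(N+1)) by (field; lra). lra. }
    pose proof (exp_ineq1_le ((1-g)*L)) as H2. unfold t; fold L.
    assert ((1-g)/(N+1) <= (1-g)*L).
    { replace ((1-g)/(N+1)) with ((1-g)*(1/(N+1))) by (field; lra).
      apply Rmult_le_compat_l; lra. }
    lra. }
  { unfold t; fold L. set (m := (1-g)*L).
    pose proof (exp_ineq1_le (L - m)) as H1.
    pose proof (exp_ineq1_le (- m)) as H2.
    assert (A1 : exp L = exp m * exp (L - m)) by (rewrite <- exp_plus; f_equal; ring).
    assert (A2 : 1 = exp m * exp (- m)) by (rewrite <- exp_plus; replace (m + - m) with 0 by ring; symmetry; apply exp_0).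
    assert (0 < exp m) by apply exp_pos.
    assert (B1 : exp m * (1 + (L - m)) <= exp L) by (rewrite A1; apply Rmult_le_compat_l; lra).
    assert (B2 : exp m * (1 - m) <= 1) by (rewrite A2 at 2; apply Rmult_le_compat_l; lra).
    assert (C : exp m <= (1-g) * exp L + g).
    { replace (exp m) with ((1-g)*(exp m * (1 + (L - m))) + g*(exp m * (1 - m))) at 1
        by (unfold m; ring).
      nra. }
    rewrite eL in C. replace ((1 - g) * ((N + 1) / N) + g) with (1 + (1-g)/N) in C by (field; lra).
    exact C. }
Qed.

Lemma inv_main (gamma c : R) (hg0 : 0 < gamma) (hg1 : gamma < 1) (hc : 0 <= c) (n : nat) :
  (1 <= n)%nat ->
  let b := (gamma ^ 2 + gamma - 1) / gamma in
  c / (1-gamma) * (b * Rpower (INR n) (- (1 - gamma)) + (1-gamma)/(gamma * INR n))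
   <= c / (1-gamma) - vbar c gamma n.
Proof.
  intros hn b.
  assert (hb : b * gamma = gamma^2 + gamma - 1) by (unfold b; field; lra).
  assert (ca : 0 <= c / (1-gamma)) by (apply divpos; lra).
  induction n as [|n IH]; [lia|].
  rewrite vbar_S, S_INR.
  destruct n as [|n].
  - simpl INR. rewrite Rplus_0_l. unfold Rpower. rewrite ln_1, Rmult_0_r, exp_0.
    simpl vbar. right. unfold b. field. lra.
  - specialize (IH ltac:(lia)).
    set (N := INR (S n)) in *.
    assert (N1 : 1 <= N) by (unfold N; rewrite S_INR; pose proof (pos_INR n); lra).
    destruct (facts gamma N hg0 hg1 N1) as [s0 [s1 [est [tlo tup]]]].
    set (s := exp (-(1-gamma) * ln (N+1))) in *.
    set (t := exp ((1-gamma) * (ln (N+1) - ln N))) in *.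
    unfold Rpower in *. rewrite est in IH.
    change (exp (- (1 - gamma) * ln (N + 1))) with s.
    pose proof (step gamma N s t b hg0 hg1 N1 s0 s1 hb (fun _ => tlo) (fun _ => tup)) as St.
    set (v := vbar c gamma (S n)) in *.
    assert (E : c / (1 - gamma) - ((1 - 1 / (N + 1)) * v + 1 / (N + 1) * (c + gamma * v))
       = (c/(1-gamma) - v) * (1 - (1-gamma)/(N+1))) by (field; lra).
    rewrite E.
    assert (pos : 0 <= 1 - (1-gamma)/(N+1)).
    { assert ((1-gamma)/(N+1) <= 1); [|lra].
      apply (Rmult_le_reg_r (N+1)); [lra|].
      replace ((1-gamma)/(N+1)*(N+1)) with (1-gamma) by (field; lra). lra. }
    apply Rle_trans with (c/(1-gamma) * ((b*s*t + (1-gamma)/(gamma*N)) * (1 - (1-gamma)/(N+1)))).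
    + apply Rmult_le_compat_l; assumption.
    + rewrite <- Rmult_assoc. apply Rmult_le_compat_r; [assumption|]. replace (b*s*t) with (b*(s*t)) by ring. exact IH.
Qed.

Theorem theorem2 (gamma c : R) (hg0 : 0 < gamma) (hg1 : gamma < 1) (hc : 0 <= c)
  (n : nat) (hn : (1 <= n)%nat) :
  let b := (gamma ^ 2 + gamma - 1) / gamma in
  vbar c gamma n <=
    c / (1 - gamma) *
      (1 - b * Rpower (INR n) (- (1 - gamma)) - (1 - gamma) / gamma * (1 / INR n)).
Proof.
  intros b.
  pose proof (inv_main gamma c hg0 hg1 hc n hn) as H. cbv zeta in H. fold b in H.
  assert (N1 : 1 <= INR n) by (apply (le_INR 1); lia).
  replace (c / (1 - gamma) *
      (1 - b * Rpower (INR n) (- (1 - gamma)) - (1 - gamma) / gamma * (1 / INR n)))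
    with (c / (1-gamma) - c / (1-gamma) * (b * Rpower (INR n) (- (1 - gamma)) + (1-gamma)/(gamma * INR n)))
    by (field; lra).
  lra.
Qed.
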